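(* Let $W_{(\alpha,\beta)}=(T_1,T_2)$ be a commuting 2-variable weighted shift. Then (i) $T_1^*T_1$ commutes with $T_2^*T_1$ if and only if $\alpha_{\mathbf{k}+\varepsilon_1}=\alpha_{\mathbf{k}+\varepsilon_2}$ for all $\mathbf{k}\in\mathbb{Z}_+^2$; (ii) $T_2^*T_2$ commutes with $T_1^*T_2$ if and only if $\beta_{\mathbf{k}+\varepsilon_1}=\beta_{\mathbf{k}+\varepsilon_2}$ for all $\mathbf{k}\in\mathbb{Z}_+^2$; (iii) $T_1^*T_1$ always commutes with $T_2^*T_2$.
   Context: A 2-variable weighted shift $W_{(\alpha,\beta)}=(T_1,T_2)$ on $\ell^2(\mathbb{Z}_+^2)$ (orthonormal basis $\{e_{\mathbf{k}}\}$) is given by bounded positive weights via $T_1e_{\mathbf{k}}=\alpha_{\mathbf{k}}e_{\mathbf{k}+\varepsilon_1}$, $T_2e_{\mathbf{k}}=\beta_{\mathbf{k}}e_{\mathbf{k}+\varepsilon_2}$, $\varepsilon_1=(1,0)$, $\varepsilon_2=(0,1)$; it is commuting iff $\beta_{\mathbf{k}+\varepsilon_1}\alpha_{\mathbf{k}}=\alpha_{\mathbf{k}+\varepsilon_2}\beta_{\mathbf{k}}$ for all $\mathbf{k}$. *)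

(* Defs.v *)
(* Vectors of l^2(Z_+^2) are represented by their coordinate
   functions f : nat -> nat -> R, f i j = <x, e_(i,j)>.  Real scalars suffice:
   all weights are real, so all operators involved have real matrices. *)
From Stdlib Require Import Reals List.
Open Scope R_scope.

Definition vec := nat -> nat -> R.

Definition sum_sq_box (f : vec) (N : nat) : R :=
  fold_right Rplus 0
    (map (fun i => fold_right Rplus 0 (map (fun j => f i j * f i j) (seq 0 N)))
         (seq 0 N)).
Definition l2 (f : vec) : Prop := exists M : R, forall N, sum_sq_box f N <= M.

Definition weights := nat -> nat -> R.

(* T1 e_(i,j) = alpha_(i,j) e_(i+1,j);  T2 e_(i,j) = beta_(i,j) e_(i,j+1) *)
Definition T1 (a : weights) (f : vec) : vec :=
  fun i j => match i with O => 0 | S i' => a i' j * f i' j end.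
Definition T2 (b : weights) (f : vec) : vec :=
  fun i j => match j with O => 0 | S j' => b i j' * f i j' end.
(* Hilbert-space adjoints: T1^* e_(i,j) = alpha_(i-1,j) e_(i-1,j) (0 if i = 0),
   i.e. (T1^* f)(i,j) = alpha_(i,j) f(i+1,j). *)
Definition T1adj (a : weights) (f : vec) : vec := fun i j => a i j * f (S i) j.
Definition T2adj (b : weights) (f : vec) : vec := fun i j => b i j * f i (S j).

Definition bounded_pos_weights (w : weights) : Prop :=
  (forall i j, 0 < w i j) /\ (exists M, forall i j, w i j <= M).

Definition commuting_shift (a b : weights) : Prop :=
  forall i j, b (S i) j * a i j = a i (S j) * b i j.

Definition op_commute (A B : vec -> vec) : Prop :=
  forall f, l2 f -> A (B f) = B (A f).

(* Main.v *)
Require Import Defs.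
From Stdlib Require Import Reals List Lra Psatz Arith Lia FunctionalExtensionality.
Open Scope R_scope.

Lemma L1 (g : nat -> R) (p : nat) (c : R) :
  0 <= c -> (forall k, g k <= if Nat.eqb k p then c else 0) ->
  forall N s, fold_right Rplus 0 (map g (seq s N)) <= if Nat.leb s p then c else 0.
Proof.
  intros Hc Hg N; induction N as [|N IH]; intros s; simpl.
  - destruct (Nat.leb s p); lra.
  - specialize (IH (S s)). specialize (Hg s).
    destruct (Nat.eqb s p) eqn:E1.
    + apply Nat.eqb_eq in E1; subst.
      rewrite Nat.leb_refl. assert (Nat.leb (S p) p = false) as E
        by (apply Nat.leb_gt; lia). rewrite E in IH. lra.
    + destruct (Nat.leb s p) eqn:E2; destruct (Nat.leb (S s) p) eqn:E3; try lra.
      apply Nat.leb_gt in E2. apply Nat.leb_le in E3. lia.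
Qed.

Lemma L1' (g : nat -> R) (p : nat) (c : R) :
  0 <= c -> (forall k, g k <= if Nat.eqb k p then c else 0) ->
  forall N, fold_right Rplus 0 (map g (seq 0 N)) <= c.
Proof.
  intros Hc Hg N. pose proof (L1 g p c Hc Hg N 0). simpl in H. exact H.
Qed.

Definition ind (p q : nat) : vec :=
  fun i j => if andb (Nat.eqb i p) (Nat.eqb j q) then 1 else 0.

Lemma ind_l2 p q : l2 (ind p q).
Proof.
  exists 1. intros N. unfold sum_sq_box.
  apply (L1' _ p 1); [lra|]. intros i.
  destruct (Nat.eqb i p) eqn:E.
  - apply (L1' _ q 1); [lra|]. intros j. unfold ind. rewrite E.
    destruct (Nat.eqb j q); simpl; lra.
  - apply (L1' _ q 0); [lra|]. intros j. unfold ind. rewrite E.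
    destruct (Nat.eqb j q); simpl; lra.
Qed.

Lemma sq_eq (x y : R) : 0 < x -> 0 < y -> x * x = y * y -> x = y.
Proof. intros. nra. Qed.

Theorem lemma3p6 (a b : weights) :
  bounded_pos_weights a -> bounded_pos_weights b -> commuting_shift a b ->
  (op_commute (fun f => T1adj a (T1 a f)) (fun f => T2adj b (T1 a f))
     <-> forall i j, a (S i) j = a i (S j)) /\
  (op_commute (fun f => T2adj b (T2 b f)) (fun f => T1adj a (T2 b f))
     <-> forall i j, b (S i) j = b i (S j)) /\
  op_commute (fun f => T1adj a (T1 a f)) (fun f => T2adj b (T2 b f)).
Proof.
  intros [Ha _] [Hb _] Hc.
  split; [split|split; [split|]].
  - intros H i j.
    specialize (H (ind i (S j)) (ind_l2 _ _)).
    apply (f_equal (fun F => F (S i) j)) in H.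
    unfold T1adj, T2adj, T1, ind in H. simpl in H.
    rewrite !Nat.eqb_refl in H. simpl in H.
    pose proof (Ha (S i) j); pose proof (Ha i (S j)); pose proof (Hb (S i) j).
    apply sq_eq; auto.
    assert (b (S i) j * a i (S j) <> 0) by (apply Rmult_integral_contrapositive; lra).
    apply (Rmult_eq_reg_r (b (S i) j * a i (S j))); [|auto].
    lra.
  - intros H f _. extensionality i. extensionality j.
    unfold T1adj, T2adj, T1. destruct i as [|i]; simpl; [ring|].
    rewrite H. ring.
  - intros H i j.
    specialize (H (ind (S i) j) (ind_l2 _ _)).
    apply (f_equal (fun F => F i (S j))) in H.
    unfold T1adj, T2adj, T2, ind in H. simpl in H.
    rewrite !Nat.eqb_refl in H. simpl in H.
    pose proof (Hb (S i) j); pose proof (Hb i (S j)); pose proof (Ha i (S j)).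
    symmetry. apply sq_eq; auto.
    assert (a i (S j) * b (S i) j <> 0) by (apply Rmult_integral_contrapositive; lra).
    apply (Rmult_eq_reg_r (a i (S j) * b (S i) j)); [|auto].
    lra.
  - intros H f _. extensionality i. extensionality j.
    unfold T1adj, T2adj, T2. destruct j as [|j]; simpl; [ring|].
    rewrite H. ring.
  - intros f _. extensionality i. extensionality j.
    unfold T1adj, T2adj, T1, T2. simpl. ring.
Qed.
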